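(* For all integers $r\ge 2$ and $n\ge r$, $$\mathrm{exa}_1(n,K_r)=\binom{r}{2}+(r-2)(n-r)+\mathrm{ex}(n-r,K_r).$$
   Context: For a graph $H$ and a graph $F$, $\mathcal N(H,F)$ denotes the number of subgraphs of $H$ isomorphic to $F$. For a nonnegative integer $k$, $\mathrm{exa}_k(n,F)$ is the largest number of edges of a simple graph $H$ on $n$ vertices with $\mathcal N(H,F)=k$. $\mathrm{ex}(m,F)$ is the Turán number: the largest number of edges of a simple graph on $m$ vertices containing no subgraph isomorphic to $F$ (with $\mathrm{ex}(0,F)=0$). $K_r$ is the complete graph on $r$ vertices. *)

(* Defs.v *)
(* Simple graphs on a finite vertex type T are represented
   by their edge set E : {set {set T}}, every edge being a 2-element set. *)
From mathcomp Require Import all_boot all_order.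
Set Implicit Arguments. Unset Strict Implicit. Unset Printing Implicit Defensive.

Definition simple_graph (T : finType) (E : {set {set T}}) : bool :=
  [forall e in E, #|e| == 2].

Definition is_subgraph (T : finType) (E : {set {set T}})
    (p : {set T} * {set {set T}}) : bool :=
  (p.2 \subset E) && [forall e in p.2, e \subset p.1].

Definition iso_to (U T : finType) (EF : {set {set U}})
    (p : {set T} * {set {set T}}) : bool :=
  [exists f : {ffun U -> T},
     [&& injectiveb f, p.1 == f @: [set: U] & p.2 == [set f @: e | e : {set U} in EF]]].

Definition Ncount (T U : finType) (E : {set {set T}}) (EF : {set {set U}}) : nat :=
  #|[set p : {set T} * {set {set T}} | is_subgraph E p && iso_to EF p]|.

Definition Kr (r : nat) : {set {set 'I_r}} := [set e : {set 'I_r} | #|e| == 2].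

Definition exa (k n : nat) (U : finType) (EF : {set {set U}}) : nat :=
  \max_(E : {set {set 'I_n}} | simple_graph E && (Ncount E EF == k)) #|E|.

Definition ex (m : nat) (U : finType) (EF : {set {set U}}) : nat :=
  \max_(E : {set {set 'I_m}} | simple_graph E && (Ncount E EF == 0)) #|E|.

(* Main.v *)
Require Import Defs.
From mathcomp Require Import all_boot all_order.
Set Implicit Arguments. Unset Strict Implicit. Unset Printing Implicit Defensive.


Section Gen.
Variable T : finType.

Definition clique (E : {set {set T}}) (S : {set T}) :=
  [forall x in S, forall y in S, (x != y) ==> ([set x; y] \in E)].
Definition cl r (E : {set {set T}}) := [set S : {set T} | (#|S| == r) && clique E S].

Lemma cliqueP (E : {set {set T}}) (S : {set T}) : reflect (forall x y, x \in S -> y \in S -> x != y -> [set x; y] \in E) (clique E S).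
Proof.
apply: (iffP forall_inP) => [H x y xS yS xy | H x xS].
  by move/forall_inP: (H x xS) => /(_ y yS) /implyP; apply.
by apply/forall_inP => y yS; apply/implyP; apply: H.
Qed.

Lemma eq_set2 (a b c d : T) : [set a; b] = [set c; d] -> (a = c /\ b = d) \/ (a = d /\ b = c).
Proof.
move=> E.
have ha : a \in [set c; d] by rewrite -E !inE eqxx.
have hb : b \in [set c; d] by rewrite -E !inE eqxx orbT.
have hc : c \in [set a; b] by rewrite E !inE eqxx.
have hd : d \in [set a; b] by rewrite E !inE eqxx orbT.
move: ha hb hc hd; rewrite !inE.
case/orP=> /eqP ha; case/orP=> /eqP hb; subst; auto.
- by rewrite !orbb => _ /eqP ->; auto.
- by rewrite !orbb => /eqP -> _; auto.
Qed.

Lemma imset_preK (U : finType) (f : U -> T) (e : {set T}) : e \subset f @: setT -> f @: (f @^-1: e) = e.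
Proof.
move=> /subsetP H; apply/setP => x; apply/idP/idP => [/imsetP[y] | xe].
  by rewrite inE => ye ->.
by have /imsetP[y _ yx] := H x xe; apply/imsetP; exists y; rewrite // inE -yx.
Qed.

Lemma two_imset (U : finType) (f : U -> T) k : injective f ->
  [set f @: e | e : {set U} in [set e : {set U} | #|e| == k]] =
  [set e : {set T} | (e \subset f @: setT) && (#|e| == k)].
Proof.
move=> fi; apply/setP => e; rewrite inE; apply/imsetP/andP => [[e' ] | [sub ce]].
  rewrite inE => ce' ->; rewrite card_imset //; split => //.
  by apply: imsetS; apply: subsetT.
exists (f @^-1: e); last by rewrite imset_preK.
by rewrite inE -(card_imset _ fi) imset_preK.
Qed.

Lemma Ncount_cl r (E : {set {set T}}) : Ncount E (Kr r) = #|cl r E|.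
Proof.
rewrite /Ncount.
pose two (S : {set T}) := [set e : {set T} | (e \subset S) && (#|e| == 2)].
have -> : [set p : {set T} * {set {set T}} | is_subgraph E p && iso_to (Kr r) p]
   = [set (S, two S) | S in cl r E].
  apply/setP => [[S E']]; rewrite inE /is_subgraph /iso_to /=.
  apply/idP/imsetP => [/andP[/andP[sE' _] /existsP[f /and3P[/injectiveP fi /eqP HS /eqP HE']]] | [S0]].
    have HE2 : E' = two S by rewrite HE' /Kr two_imset // HS.
    exists S => //; last by rewrite HE2.
    rewrite inE {1}HS card_imset // cardsT card_ord eqxx /=.
    apply/cliqueP => x y xS yS xy; apply: (subsetP sE'); rewrite HE2 inE.
    rewrite cards2 xy andbT; apply/subsetP => z; rewrite !inE => /orP[]/eqP->//.
  rewrite inE => /andP[/eqP cS /cliqueP cq] [-> ->]; apply/andP; split.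
    apply/andP; split.
      apply/subsetP => e; rewrite inE => /andP[eS /cards2P[x [y [xy ex]]]].
      by rewrite ex; apply: cq => //; apply: (subsetP eS); rewrite ex !inE eqxx ?orbT.
    by apply/forall_inP => e; rewrite inE => /andP[].
  have cS' : r = #|S0| by [].
  pose f := [ffun i : 'I_r => enum_val (cast_ord cS' i)].
  have fi : injective f.
    by move=> i j; rewrite !ffunE => /enum_val_inj /cast_ord_inj.
  have HS : S0 = f @: setT.
    apply/eqP; rewrite eq_sym eqEcard card_imset // cardsT card_ord cS leqnn andbT.
    by apply/subsetP => x /imsetP[i _ ->]; rewrite ffunE enum_valP.
  apply/existsP; exists f; apply/and3P; split => //=; first exact/injectiveP.
    by rewrite HS.
  by rewrite /Kr two_imset // -HS.
rewrite card_imset //; by move=> S1 S2 [].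
Qed.

End Gen.


Lemma card_pairs (T : finType) (P : rel T) :
  #|[set p : T * T | P p.1 p.2]| = \sum_x #|[set y | P x y]|.
Proof.
have -> : \sum_x #|[set y | P x y]| = \sum_x \sum_y (P x y : nat).
  apply: eq_bigr => x _; rewrite -sum1_card big_mkcond /=.
  by apply: eq_bigr => y _; rewrite !inE; case: (P x y).
rewrite pair_bigA /= -sum1_card big_mkcond /=.
by apply: eq_bigr => p _; rewrite !inE; case: (P p.1 p.2).
Qed.

Lemma turan_col (T : finType) (adj : rel T) : symmetric adj -> irreflexive adj ->
  forall k (V : {set T}),
  (forall S : {set T}, S \subset V -> (forall x y, x \in S -> y \in S -> x != y -> adj x y) -> #|S| <= k) ->
  exists c : T -> nat, (forall v, v \in V -> c v < k) /\
    (forall v, v \in V -> #|[set u in V | adj v u]| <= #|[set u in V | c u != c v]|).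
Proof.
move=> sym irr; elim=> [|k IH] V HV.
  have V0 : forall v, v \notin V.
    move=> v; apply/negP => vV.
    suff : 1 <= 0 by [].
    have <- : #|[set v]| = 1 by rewrite cards1.
    apply: HV.
      by rewrite sub1set.
    by move=> x y; rewrite !inE => /eqP-> /eqP->; rewrite eqxx.
  by exists (fun _ => 0); split => v vV; have := V0 v; rewrite vV.
case: (set_0Vmem V) => [-> | [x0 x0V]].
  by exists (fun _ => 0); split => v; rewrite inE.
pose deg v := #|[set u in V | adj v u]|.
case: (@arg_maxnP _ x0 (mem V) deg x0V) => x xV0 xmax.
have xV : x \in V := xV0.
pose W := [set u in V | adj x u].
have WV : W \subset V by apply/subsetP => u; rewrite inE => /andP[].
have xW : x \notin W by rewrite inE irr andbF.
have WP : forall u, (u \in W) = (u \in V) && adj x u by move=> u; rewrite inE.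
clearbody W.
have [c' [c'k c'deg]] : exists c' : T -> nat, (forall v, v \in W -> c' v < k) /\
    (forall v, v \in W -> #|[set u in W | adj v u]| <= #|[set u in W | c' u != c' v]|).
  apply: IH => S SW cq.
  have : #|x |: S| <= k.+1.
    apply: HV.
      by rewrite subUset sub1set xV (subset_trans SW WV).
    move=> a b; rewrite !inE => /orP[/eqP->|aS] /orP[/eqP->|bS]; rewrite ?eqxx // => ab.
    - by move/subsetP: SW => /(_ b bS); rewrite WP => /andP[].
    - by rewrite sym; move/subsetP: SW => /(_ a aS); rewrite WP => /andP[].
    - exact: cq.
  have xS : x \notin S by apply: contra xW; exact: (subsetP SW).
  by rewrite cardsU1 xS add1n ltnS.
exists (fun v => if v \in W then c' v else k); split.
  move=> v vV; case: ifP => vW; last by [].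
  by apply: ltnW; rewrite ltnS; exact: c'k.
move=> v vV; case: ifP => vW.
  rewrite -(cardsID W [set u in V | adj v u]) -(cardsID W [set u in V | _ != _]).
  have -> : [set u in V | (if u \in W then c' u else k) != c' v] :\: W = V :\: W.
    apply/setP => u; rewrite !inE; case: (u \in W) => //=.
    by rewrite eq_sym (ltn_eqF (c'k v vW)) andbT.
  have -> : [set u in V | (if u \in W then c' u else k) != c' v] :&: W = [set u in W | c' u != c' v].
    apply/setP => u; rewrite !inE; case uW: (u \in W) => /=; rewrite ?andbF ?andbT //.
    by move/subsetP: WV => /(_ u uW) ->.
  apply: leq_add.
    apply: leq_trans (c'deg v vW); apply: subset_leq_card; apply/subsetP => u.
    by rewrite !inE => /andP[/andP[_ ->] ->].
  by apply: subset_leq_card; apply/subsetP => u; rewrite !inE => /andP[-> /andP[->]].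
apply: leq_trans (xmax v vV) _.
rewrite /deg; apply: subset_leq_card; apply/subsetP => u; rewrite inE -WP => uW.
have uV : u \in V by exact: (subsetP WV).
by rewrite inE uV uW /= (ltn_eqF (c'k u uW)).
Qed.


Definition edg (T : finType) (adj : rel T) : {set {set T}} :=
  [set [set p.1; p.2] | p in [set p : T * T | adj p.1 p.2]].

Lemma sub_card (T : finType) (X : {set T}) k : k <= #|X| -> exists Y : {set T}, Y \subset X /\ #|Y| = k.
Proof.
move=> kX; exists [set x in take k (enum X)]; split.
  by apply/subsetP => x; rewrite inE => /mem_take; rewrite mem_enum.
rewrite cardsE.
have /card_uniqP -> := take_uniq k (enum_uniq (mem X)).
by rewrite size_takel // -cardE.
Qed.

Lemma pair2 m (adj : rel 'I_m) : symmetric adj -> irreflexive adj ->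
  #|[set p : 'I_m * 'I_m | adj p.1 p.2]| = 2 * #|edg adj|.
Proof.
move=> sym irr.
pose L := [set p : 'I_m * 'I_m | adj p.1 p.2 && (p.1 < p.2)].
rewrite -(cardsID [set p : 'I_m * 'I_m | p.1 < p.2]).
have -> : [set p : 'I_m * 'I_m | adj p.1 p.2] :&: [set p : 'I_m * 'I_m | p.1 < p.2] = L.
  by apply/setP => p; rewrite !inE.
have -> : [set p : 'I_m * 'I_m | adj p.1 p.2] :\: [set p : 'I_m * 'I_m | p.1 < p.2] = [set (p.2, p.1) | p in L].
  apply/setP => [[a b]]; rewrite !inE /=; apply/idP/imsetP => [/andP[nlt adjab] | [[a' b']]].
    exists (b, a) => //; rewrite inE /= sym adjab /=.
    rewrite ltn_neqAle leqNgt nlt andbT.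
    by apply/eqP => /val_inj ba; move: adjab; rewrite ba irr.
  rewrite inE /= => /andP[ab lt] [-> ->]; rewrite sym ab /= -leqNgt ltnW //.
rewrite card_imset; last by move=> [? ?] [? ?] [-> ->].
have -> : edg adj = [set [set p.1; p.2] | p in L].
  apply/setP => e; apply/imsetP/imsetP => [[[a b]] | [[a b]]]; rewrite !inE /=.
    move=> ab ->; case: (ltngtP a b) => [lt|gt|eq].
    - by exists (a, b); rewrite // inE /= ab lt.
    - by exists (b, a); [rewrite inE /= sym ab gt | rewrite /= setUC].
    - by move: ab; rewrite (val_inj eq) irr.
  by move=> /andP[ab _] ->; exists (a, b); rewrite // inE.
rewrite card_in_imset ?addnn ?mul2n //.
move=> [a b] [c d]; rewrite !inE /= => /andP[_ ab] /andP[_ cd] /eq_set2 [[-> ->] | [ad bc]] //.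
by subst; move: (ltn_trans ab cd); rewrite ltnn.
Qed.

Lemma edg_simple (T : finType) (E : {set {set T}}) : simple_graph E ->
  E = edg (fun x y => (x != y) && ([set x; y] \in E)).
Proof.
move=> /forall_inP sE; apply/setP => e; apply/idP/imsetP => [eE | [[a b]]].
  have /cards2P[x [y [xy ex]]] := sE e eE.
  by exists (x, y); rewrite // inE /= xy -ex eE.
by rewrite inE /= => /andP[_ H] ->.
Qed.

Lemma colorable s m (E0 : {set {set 'I_m}}) : simple_graph E0 -> cl s.+2 E0 = set0 ->
  exists ci : 'I_m -> 'I_s.+1, #|E0| <= #|edg (fun x y => ci x != ci y)|.
Proof.
move=> sE cl0.
pose adj := fun x y : 'I_m => (x != y) && ([set x; y] \in E0).
have sym : symmetric adj by move=> x y; rewrite /adj eq_sym setUC.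
have irr : irreflexive adj by move=> x; rewrite /adj eqxx.
have hyp : forall S : {set 'I_m}, S \subset setT ->
    (forall x y, x \in S -> y \in S -> x != y -> adj x y) -> #|S| <= s.+1.
  move=> S _ cq; rewrite leqNgt; apply/negP => big.
  have [Y [YS cY]] := sub_card big.
  have : Y \in cl s.+2 E0.
    rewrite inE cY eqxx /=; apply/cliqueP => x y xY yY xy.
    by have /andP[] := cq x y (subsetP YS x xY) (subsetP YS y yY) xy.
  by rewrite cl0 inE.
have [c [ck cdeg]] := @turan_col _ adj sym irr s.+1 setT hyp.
pose ci := fun v => (inord (c v) : 'I_s.+1).
exists ci.
have ciE : forall u v, (ci u != ci v) = (c u != c v).
  move=> u v; rewrite /ci -val_eqE /= !inordK //; exact: ck.
have sym2 : symmetric (fun x y => ci x != ci y) by move=> x y; rewrite eq_sym.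
have irr2 : irreflexive (fun x y => ci x != ci y) by move=> x; rewrite eqxx.
rewrite -(leq_pmul2l (isT : 0 < 2)) -pair2 // {1}(edg_simple sE) -pair2 //.
rewrite (card_pairs adj) (card_pairs (fun x y => ci x != ci y)); apply: leq_sum => v _.
have e1 : #|[set u | adj v u]| = #|[set u in setT | adj v u]| by apply: eq_card => u; rewrite !inE.
have e2 : #|[set u | ci v != ci u]| = #|[set u in setT | c u != c v]|.
  by apply: eq_card => u; rewrite !inE ciE eq_sym.
rewrite e1 e2; exact: cdeg.
Qed.


Lemma imset2set (T U : finType) (f : U -> T) (a b : U) : f @: [set a; b] = [set f a; f b].
Proof. by rewrite imsetU1 imset_set1. Qed.

Lemma ub (T : finType) s m (E : {set {set T}}) : #|T| = s.+2 + m -> simple_graph E ->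
  #|cl s.+2 E| = 1 -> #|E| <= 'C(s.+2, 2) + s * m + ex m (Kr s.+2).
Proof.
move=> cT sE0 /eqP/cards1P [A clA].
have sE := forall_inP sE0.
have AinCl : A \in cl s.+2 E by rewrite clA set11.
move: (AinCl); rewrite inE => /andP[/eqP cA /cliqueP cqA].
have uniqA : forall S, S \in cl s.+2 E -> S = A by move=> S; rewrite clA inE => /eqP.
have cC : #|~:A| = m.
  by have := cardsC A; rewrite cA cT => /eqP; rewrite eqn_add2l => /eqP.
pose EA := [set e in E | e \subset A].
pose EB := [set e in E | e \subset ~:A].
pose EC := [set e in E | ~~(e \subset A) && ~~(e \subset ~:A)].
have : E \subset EA :|: EC :|: EB.
  apply/subsetP => e eE; rewrite !inE eE /=.
  by case: (e \subset A); case: (e \subset ~:A).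
move/subset_leq_card => h; apply: leq_trans h _.
rewrite cardsU; apply: leq_trans (leq_subr _ _) _.
apply: leq_add; first (rewrite cardsU; apply: leq_trans (leq_subr _ _) _; apply: leq_add).
- rewrite -cA -cards_draws; apply: subset_leq_card; apply/subsetP => e.
  by rewrite !inE => /andP[eE ->]; rewrite sE.
- pose NA b := [set a in A | [set a; b] \in E].
  have NAs : forall b, b \notin A -> #|NA b| <= s.
    move=> b bA; rewrite leqNgt; apply/negP => big.
    have [Y [YN cY]] := sub_card big.
    have YA : Y \subset A.
      by apply/subsetP => y /(subsetP YN); rewrite inE => /andP[].
    have bY : b \notin Y by apply: contra bA; apply: (subsetP YA).
    have : b |: Y \in cl s.+2 E.
      rewrite inE cardsU1 bY cY eqxx /=; apply/cliqueP => x y.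
      rewrite !inE => /orP[/eqP->|xY] /orP[/eqP->|yY]; rewrite ?eqxx // => xy.
      + by move/(subsetP YN): yY; rewrite inE setUC => /andP[].
      + by move/(subsetP YN): xY; rewrite inE => /andP[].
      + by apply: cqA; rewrite // (subsetP YA).
    by move/uniqA => H; move: bA; rewrite -H setU11.
  pose P := [set p : T * T | (p.1 \notin A) && (p.2 \in NA p.1)].
  have : EC \subset [set [set p.2; p.1] | p in P].
    apply/subsetP => e; rewrite inE => /andP[eE /andP[nA nC]].
    have /cards2P[x [y [xy ex]]] := sE e eE.
    move: nA nC; rewrite ex !subUset !sub1set !inE.
    case xA: (x \in A); case yA: (y \in A) => //= _ _.
      by apply/imsetP; exists (y, x); rewrite // !inE /= yA xA -ex eE.
    by apply/imsetP; exists (x, y); [rewrite !inE /= yA xA setUC -ex eE | rewrite /= setUC].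
  move/subset_leq_card => h; apply: leq_trans h _; apply: leq_trans (leq_imset_card _ _) _.
  rewrite (card_pairs (fun b a => (b \notin A) && (a \in NA b))).
  apply: (@leq_trans (\sum_b (if b \in ~:A then s else 0))).
    apply: leq_sum => b _; rewrite inE; case bA: (b \in A) => /=.
      by rewrite leqn0 cards_eq0; apply/eqP/setP => a; rewrite !inE.
    by apply: leq_trans (NAs b (negbT bA)); apply: subset_leq_card; apply/subsetP => a; rewrite !inE.
  by rewrite -big_mkcond sum_nat_const cC mulnC.
- pose g : 'I_m -> T := fun i => enum_val (cast_ord (esym cC) i).
  have gi : injective g by move=> i j /enum_val_inj /cast_ord_inj.
  have gA : forall i, g i \in ~:A by move=> i; apply: enum_valP.
  have himg : ~:A \subset g @: setT.
    have : g @: setT == ~:A.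
      rewrite eqEcard card_imset // cardsT card_ord cC leqnn andbT.
      by apply/subsetP => x /imsetP[i _ ->].
    by move/eqP->.
  pose E' := [set e : {set 'I_m} | g @: e \in E].
  have : EB \subset [set g @: e | e : {set 'I_m} in E'].  
    apply/subsetP => e; rewrite inE => /andP[eE eC].
    have ee := imset_preK (subset_trans eC himg).
    by apply/imsetP; exists (g @^-1: e); rewrite // inE ee.
  move/subset_leq_card => h; apply: leq_trans h _; apply: leq_trans (leq_imset_card _ _) _.
  rewrite /ex; apply: leq_bigmax_cond; apply/andP; split.
    by apply/forall_inP => e; rewrite inE => /sE; rewrite card_imset.
  rewrite Ncount_cl cards_eq0; apply/eqP/setP => S; rewrite !inE.
  apply/negP => /andP[/eqP cS /cliqueP cq].
  have : g @: S \in cl s.+2 E.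
    rewrite inE card_imset // cS eqxx /=; apply/cliqueP => x y.
    move=> /imsetP[a aS ->] /imsetP[b bS ->] gab.
    have ab : a != b by apply: contra gab => /eqP->.
    by have := cq a b aS bS ab; rewrite inE imset2set.
  move/uniqA => gS.
  have : 0 < #|A| by rewrite cA.
  rewrite card_gt0 => /set0Pn [a aA].
  by have := aA; rewrite -gS => /imsetP[i _ ai]; move: (gA i); rewrite -ai inE aA.
Qed.


Lemma cardsU0 (T : finType) (X Y : {set T}) : X :&: Y = set0 -> #|X :|: Y| = #|X| + #|Y|.
Proof. by move=> H; rewrite cardsU H cards0 subn0. Qed.

Section LB.
Variables (s m : nat) (ci : 'I_m -> 'I_s.+1).
Local Notation T := ('I_(s.+2 + m)).
Definition aV (i : 'I_s.+2) : T := unsplit (inl i).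
Definition bV (j : 'I_m) : T := unsplit (inr j).
Definition wd (i : 'I_s.+1) : 'I_s.+2 := widen_ord (leqnSn s.+1) i.
Definition col (x : T) : 'I_s.+2 :=
  match split x with inl i => i | inr j => wd (ci j) end.
Definition Aset : {set T} := [set aV i | i in setT].
Definition EA : {set {set T}} := [set e : {set T} | (e \subset Aset) && (#|e| == 2)].
Definition ecf (p : 'I_m * 'I_s) : {set T} := [set bV p.1; aV (wd (lift (ci p.1) p.2))].
Definition EC : {set {set T}} := [set ecf p | p in setT].
Definition M := edg (fun x y : 'I_m => ci x != ci y).
Definition EB : {set {set T}} := [set bV @: e | e : {set 'I_m} in M].
Definition Eb := EA :|: EC :|: EB.

Lemma aV_inj : injective aV.
Proof. by move=> i j /(congr1 split); rewrite /aV !unsplitK => [[]]. Qed.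
Lemma bV_inj : injective bV.
Proof. by move=> i j /(congr1 split); rewrite /bV !unsplitK => [[]]. Qed.
Lemma aVbV i j : aV i != bV j.
Proof. by apply/eqP => /(congr1 split); rewrite /aV /bV !unsplitK. Qed.
Lemma bVaV j i : bV j = aV i -> False.
Proof. by move=> h; move: (aVbV i j); rewrite h eqxx. Qed.
Lemma colA i : col (aV i) = i.
Proof. by rewrite /col /aV unsplitK. Qed.
Lemma colB j : col (bV j) = wd (ci j).
Proof. by rewrite /col /bV unsplitK. Qed.
Lemma wd_max i : wd i != ord_max.
Proof. by rewrite -val_eqE /= neq_ltn ltn_ord. Qed.
Lemma wd_inj : injective wd.
Proof. by move=> i j /(congr1 val) /= /val_inj. Qed.
Lemma aVA i : aV i \in Aset.
Proof. by apply/imsetP; exists i. Qed.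
Lemma bVA j : bV j \notin Aset.
Proof. by apply/imsetP => [[i _ /eqP]]; rewrite eq_sym (negbTE (aVbV _ _)). Qed.
Lemma cardA : #|Aset| = s.+2.
Proof. by rewrite card_imset ?cardsT ?card_ord //; exact: aV_inj. Qed.

Lemma edgeE e : e \in Eb -> exists x y, [/\ e = [set x; y], col x != col y,
   (x = aV ord_max -> y \in Aset) & (y = aV ord_max -> x \in Aset)].
Proof.
rewrite !inE => /orP[/orP[/andP[eA /cards2P[x [y [xy ex]]]] | /imsetP[p _ ->]] | /imsetP[e' ]].
- move: eA xy; rewrite ex subUset !sub1set => /andP[/imsetP[i _ ->] /imsetP[j _ ->]] ij.
  exists (aV i), (aV j); split => //; rewrite ?aVA //.
  by rewrite !colA; apply: contra ij => /eqP->.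
- exists (bV p.1), (aV (wd (lift (ci p.1) p.2))); split => //.
  + by rewrite colA colB; apply/eqP => /wd_inj /eqP; rewrite (negbTE (neq_lift _ _)).
  + by move=> h; case: (bVaV h).
  + by move/aV_inj/eqP; rewrite (negbTE (wd_max _)).
- rewrite /M => /imsetP[[a b]]; rewrite inE /= => ab -> ->.
  exists (bV a), (bV b); split; first by rewrite imset2set.
  + by rewrite !colB; apply: contra ab => /eqP/wd_inj ->.
  + by move=> h; case: (bVaV h).
  + by move=> h; case: (bVaV h).
Qed.

Lemma Eb_simple : simple_graph Eb.
Proof.
apply/forall_inP => e /edgeE [x [y [-> cxy _ _]]].
by rewrite cards2; case: (eqVneq x y) cxy => // ->; rewrite eqxx.
Qed.

Lemma Eb_cl : #|cl s.+2 Eb| = 1.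
Proof.
apply/eqP/cards1P; exists Aset; apply/setP => S; rewrite !inE.
apply/idP/eqP => [/andP[/eqP cS /cliqueP cq] | ->].
  have colinj : {in S &, injective col}.
    move=> x y xS yS cxy; apply/eqP; apply/negPn/negP => xy.
    have [x' [y' [exy c' _ _]]] := edgeE (cq x y xS yS xy).
    by move: c'; case: (eq_set2 exy) => [[<- <-]|[<- <-]]; rewrite cxy eqxx.
  have : col @: S == setT.
    by rewrite eqEcard subsetT cardsT card_ord (card_in_imset colinj) cS ltnSn.
  move/eqP => cs.
  have : ord_max \in col @: S by rewrite cs inE.
  move=> /imsetP[x xS xmax].
  have xa : x = aV ord_max.
    move: xmax; rewrite -(splitK x) /col; case: (split x) => [i|j]; rewrite unsplitK.
      by move=> ->.
    by move=> /eqP; rewrite eq_sym (negbTE (wd_max _)).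
  have SA : S \subset Aset.
    apply/subsetP => y yS; case: (eqVneq x y) => [<-|xy]; first by rewrite xa aVA.
    have [x' [y' [exy _ h1 h2]]] := edgeE (cq x y xS yS xy).
    by case: (eq_set2 exy) => [[ex ey]|[ex ey]]; [rewrite ey; apply: h1 | rewrite ey; apply: h2]; rewrite -ex.
  by apply/eqP; rewrite eqEcard SA cardA cS leqnn.
rewrite cardA eqxx /=; apply/cliqueP => x y xA yA xy.
by rewrite /Eb !inE cards2 xy andbT subUset !sub1set xA yA.
Qed.

Lemma ecf_inj : injective ecf.
Proof.
move=> [a b] [c d]; rewrite /ecf /= => /eq_set2 [[h1 h2]|[h1 _]]; last by case: (bVaV h1).
have ac := bV_inj h1; subst c.
by rewrite (lift_inj (wd_inj (aV_inj h2))).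
Qed.

Lemma Eb_card : 'C(s.+2, 2) + s * m + #|M| <= #|Eb|.
Proof.
rewrite /Eb cardsU0; last first.
  apply/setP => e; rewrite !inE; apply/negP => /andP[/orP[/andP[eA _]|/imsetP[p _ ->]] /imsetP[e' ]].
    rewrite /M => /imsetP[[a b] _ ->] ee; move: eA; rewrite ee imset2set subUset !sub1set.
    by rewrite (negbTE (bVA _)).
  rewrite /M => /imsetP[[a b] _ ->]; rewrite imset2set /ecf => /eq_set2 [[_ /eqP]|[_ /eqP]];
    by rewrite (negbTE (aVbV _ _)).
rewrite cardsU0; last first.
  apply/setP => e; rewrite !inE; apply/negP => /andP[/andP[eA _] /imsetP[p _ ep]].
  by move: eA; rewrite ep subUset !sub1set (negbTE (bVA _)).
have -> : #|EA| = 'C(s.+2, 2) by rewrite /EA cards_draws cardA.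
have -> : #|EC| = s * m by rewrite /EC (card_imset _ ecf_inj) cardsT card_prod !card_ord mulnC.
by rewrite /EB (card_imset _ (imset_inj bV_inj)).
Qed.

End LB.

Unset Implicit Arguments.
Set Strict Implicit.

Theorem theorem1p4 (r n : nat) : 2 <= r -> r <= n ->
  exa 1 n (Kr r) = 'C(r, 2) + (r - 2) * (n - r) + ex (n - r) (Kr r).
Proof.
case: r => [|[|s]] // _ hn.
have [m ->] : exists m, n = s.+2 + m by exists (n - s.+2); rewrite subnKC.
rewrite addKn !subSS subn0.
apply/eqP; rewrite eqn_leq; apply/andP; split.
  apply/bigmax_leqP => E /andP[sE /eqP N1]; rewrite Ncount_cl in N1.
  by apply: ub => //; rewrite card_ord.
rewrite /ex.
pose E00 : {set {set 'I_m}} := set0.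
have P0 : simple_graph E00 && (Ncount E00 (Kr s.+2) == 0).
  apply/andP; split; first by apply/forall_inP => e; rewrite inE.
  rewrite Ncount_cl cards_eq0; apply/eqP/setP => S; rewrite !inE.
  apply/negP => /andP[/eqP cS /cliqueP cq].
  have : 1 < #|S| by rewrite cS.
  by case/card_gt1P => x [y [xS yS xy]]; have := cq x y xS yS xy; rewrite inE.
rewrite (bigmax_eq_arg E00 P0).
case: arg_maxnP => // E0 /andP[sE0 /eqP N0] _.
rewrite Ncount_cl in N0; move/eqP: N0; rewrite cards_eq0 => /eqP N0.
have [ci hci] := colorable sE0 N0.
apply: leq_trans (leq_bigmax_cond (Eb ci) _).
  by apply: leq_trans (Eb_card ci); rewrite leq_add2l.
by rewrite Eb_simple /= Ncount_cl Eb_cl.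
Qed.
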